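(* Let $V=\{1,\dots,p\}$ and let $F:2^V\to\mathbb{R}$ be a submodular, nondecreasing set-function with $F(\varnothing)=0$ and $F(\{k\})>0$ for all $k\in V$. Let $f$ be the Lovász extension of $F$ and define $\Omega:\mathbb{R}^p\to\mathbb{R}$ by $\Omega(w)=f(|w|)$. Then: (i) $\Omega$ is a norm on $\mathbb{R}^p$; (ii) $\Omega$ is the convex envelope (largest convex function lying below) of the function $g:w\mapsto F(\mathrm{Supp}(w))$ on the unit $\ell_\infty$-ball $\{w\in\mathbb{R}^p:\|w\|_\infty\leqslant 1\}$; (iii) the dual norm of $\Omega$, $\Omega^\ast(s)=\max_{\Omega(w)\leqslant 1} s^\top w$, satisfies $$\Omega^\ast(s)=\max_{A\subset V,\,A\neq\varnothing}\frac{\|s_A\|_1}{F(A)}=\max_{A\in\mathcal{T}}\frac{\|s_A\|_1}{F(A)}.$$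
   Context: For $w\in\mathbb{R}^p$, $|w|$ is the vector of absolute values of its components, $\mathrm{Supp}(w)=\{j\in V: w_j\neq 0\}$, and $s_A$ is the subvector of $s$ indexed by $A$. The Lovász extension $f:\mathbb{R}_+^p\to\mathbb{R}$ of $F$ is defined as follows: for $w\in\mathbb{R}_+^p$, order the components as $w_{j_1}\geqslant\cdots\geqslant w_{j_p}\geqslant 0$ and set $f(w)=\sum_{k=1}^p w_{j_k}[F(\{j_1,\dots,j_k\})-F(\{j_1,\dots,j_{k-1}\})]$. A set $A\subset V$ is stable if for every $B\supset A$ with $B\neq A$ one has $F(B)>F(A)$. A nonempty set $A$ is separable if there is a partition $A=B_1\cup\cdots\cup B_k$ into $k\geqslant 2$ nonempty sets with $F(A)=F(B_1)+\cdots+F(B_k)$, and inseparable otherwise. $\mathcal{T}$ denotes the family of nonempty subsets of $V$ that are both stable and inseparable. *)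

(* Defs.v *)
From mathcomp Require Import all_boot all_order all_algebra.
From mathcomp Require Import reals.
Set Implicit Arguments. Unset Strict Implicit. Unset Printing Implicit Defensive.
Import Order.TTheory GRing.Theory Num.Theory.
Local Open Scope ring_scope.

Section Defs.
Variables (R : realType) (p : nat).
Implicit Types (F : {set 'I_p} -> R) (A B : {set 'I_p}) (w s : 'I_p -> R).

Definition submodular F :=
  forall A B, F (A :|: B) + F (A :&: B) <= F A + F B.

Definition set_nondecreasing F := forall A B, A \subset B -> F A <= F B.

(* indices sorted so that w_{j_1} >= ... >= w_{j_p} *)
Definition lovasz_order w : seq 'I_p := sort (fun i j => w j <= w i) (enum 'I_p).

(* f(w) = sum_k w_{j_k} [F({j_1..j_k}) - F({j_1..j_{k-1}})] *)
Definition lovasz F w : R :=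
  let s := lovasz_order w in
  \sum_(i : 'I_p) w i * (F [set x in take (index i s).+1 s] - F [set x in take (index i s) s]).

Definition Omega F w : R := lovasz F (fun i => `|w i|).

Definition Supp w : {set 'I_p} := [set j | w j != 0].

Definition is_norm (N : ('I_p -> R) -> R) :=
  [/\ forall w, 0 <= N w,
      forall w, N w = 0 <-> w = (fun _ => 0),
      forall (a : R) w, N (fun i => a * w i) = `|a| * N w
    & forall w1 w2, N (fun i => w1 i + w2 i) <= N w1 + N w2].

Definition in_linf_ball w := forall i, `|w i| <= 1.

Definition convex_on_linf_ball (h : ('I_p -> R) -> R) :=
  forall x y (t : R), in_linf_ball x -> in_linf_ball y -> 0 <= t <= 1 ->
    h (fun i => t * x i + (1 - t) * y i) <= t * h x + (1 - t) * h y.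

Definition convex_envelope_on_linf_ball (h g : ('I_p -> R) -> R) :=
  [/\ convex_on_linf_ball h,
      forall w, in_linf_ball w -> h w <= g w
    & forall h', convex_on_linf_ball h' -> (forall w, in_linf_ball w -> h' w <= g w) ->
        forall w, in_linf_ball w -> h' w <= h w].

Definition dot s w : R := \sum_i s i * w i.

Definition l1_restr s A : R := \sum_(i in A) `|s i|.

Definition stable F A := forall B, A \proper B -> F A < F B.

Definition separable F A :=
  A != set0 /\
  exists P : {set {set 'I_p}}, [/\ partition P A, (1 < #|P|)%N & F A = \sum_(B in P) F B].

Definition inseparable F A := A != set0 /\ ~ separable F A.

Definition in_T F A := [/\ A != set0, stable F A & inseparable F A].

Definition is_max_of (P : R -> Prop) (M : R) := P M /\ forall x, P x -> x <= M.

End Defs.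

(* Main.v *)
Require Import Defs.
From mathcomp Require Import all_boot all_order all_algebra.
From mathcomp Require Import reals.
From mathcomp Require Import ring lra.
From Stdlib Require Import FunctionalExtensionality.
Import Order.TTheory GRing.Theory Num.Theory.
Set Implicit Arguments. Unset Strict Implicit. Unset Printing Implicit Defensive.
Local Open Scope ring_scope.

Definition gr (R : realType) (p : nat) (F : {set 'I_p} -> R) (o : seq 'I_p) (i : 'I_p) : R :=
  F [set x in take (index i o).+1 o] - F [set x in take (index i o) o].

Definition Tk (p : nat) (o : seq 'I_p) (n : nat) : {set 'I_p} := [set x in take n o].

Definition Wn (R : realType) (p : nat) (w : 'I_p -> R) (o : seq 'I_p) (k : nat) : R :=
  nth 0 (map w o) k.

Lemma lovaszE (R : realType) (p : nat) (F : {set 'I_p} -> R) w :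
  lovasz F w = \sum_i w i * gr F (lovasz_order w) i.
Proof. by []. Qed.

Lemma abel_nat (R : realType) (W G : nat -> R) n :
  \sum_(k < n) (W k - W k.+1) * \sum_(m < k.+1) G m =
  \sum_(k < n) W k * G k - W n * \sum_(m < n) G m.
Proof.
elim: n => [|n IH]; first by rewrite !big_ord0 mulr0 subr0.
rewrite big_ord_recr /= IH.
rewrite [\sum_(k < n.+1) W k * G k]big_ord_recr /=.
rewrite [\sum_(m < n.+1) G m]big_ord_recr /=.
ring.
Qed.

Lemma size_perm_enum p (o : seq 'I_p) : perm_eq o (enum 'I_p) -> size o = p.
Proof. by move=> /perm_size ->; rewrite size_enum_ord. Qed.

Lemma uniq_perm_enum p (o : seq 'I_p) : perm_eq o (enum 'I_p) -> uniq o.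
Proof. by move=> /perm_uniq ->; rewrite enum_uniq. Qed.

Lemma mem_perm_enum p (o : seq 'I_p) i : perm_eq o (enum 'I_p) -> i \in o.
Proof. by move=> /perm_mem ->; rewrite mem_enum. Qed.

Lemma sum_Tk (R : realType) p (o : seq 'I_p) (x0 : 'I_p) (g : 'I_p -> R) n :
  perm_eq o (enum 'I_p) -> (n <= p)%N ->
  \sum_(i in Tk o n) g i = \sum_(m < n) g (nth x0 o m).
Proof.
move=> Ho Hn.
have -> : \sum_(i in Tk o n) g i = \sum_(i <- take n o) g i.
  rewrite big_uniq; last by rewrite take_uniq // (uniq_perm_enum Ho).
  by apply: eq_bigl => i; rewrite /Tk inE.
rewrite (big_nth x0) size_take (size_perm_enum Ho).
have -> : (if (n < p)%N then n else p) = n by case: ltnP => //; move=> h; apply/eqP; rewrite eqn_leq Hn h.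
rewrite big_mkord; apply: eq_bigr => m _; by rewrite nth_take.
Qed.

Lemma abel (R : realType) p (o : seq 'I_p) (x0 : 'I_p) (w g : 'I_p -> R) :
  perm_eq o (enum 'I_p) ->
  \sum_i w i * g i = \sum_(k < p) (Wn w o k - Wn w o k.+1) * \sum_(i in Tk o k.+1) g i.
Proof.
move=> Ho.
have -> : \sum_i w i * g i = \sum_(i <- o) w i * g i.
  by rewrite (perm_big _ Ho) big_enum.
rewrite (big_nth x0) (size_perm_enum Ho) big_mkord.
transitivity (\sum_(k < p) (Wn w o k - Wn w o k.+1) * \sum_(m < k.+1) g (nth x0 o m)).
  rewrite (abel_nat (Wn w o) (fun m => g (nth x0 o m))) /Wn.
  rewrite [nth 0 _ p]nth_default ?size_map ?(size_perm_enum Ho) // mul0r subr0.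
  apply: eq_bigr => k _; by rewrite (nth_map x0) // (size_perm_enum Ho).
apply: eq_bigr => k _; by rewrite (sum_Tk x0).
Qed.

Lemma gr_nth (R : realType) p (F : {set 'I_p} -> R) (o : seq 'I_p) (x0 : 'I_p) m :
  perm_eq o (enum 'I_p) -> (m < p)%N ->
  gr F o (nth x0 o m) = F (Tk o m.+1) - F (Tk o m).
Proof.
move=> Ho Hm; rewrite /gr index_uniq ?(size_perm_enum Ho) ?(uniq_perm_enum Ho) //.
Qed.

Lemma tele (R : realType) p (F : {set 'I_p} -> R) (o : seq 'I_p) (x0 : 'I_p) n :
  perm_eq o (enum 'I_p) -> (n <= p)%N ->
  \sum_(i in Tk o n) gr F o i = F (Tk o n) - F set0.
Proof.
move=> Ho Hn; rewrite (sum_Tk x0) //.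
transitivity (\sum_(m < n) (F (Tk o m.+1) - F (Tk o m))).
  apply: eq_bigr => m _; rewrite gr_nth //; exact: leq_trans (ltn_ord m) Hn.
rewrite -(big_mkord xpredT (fun m => F (Tk o m.+1) - F (Tk o m))).
rewrite telescope_sumr //.
by rewrite /Tk take0.
Qed.


Lemma perm_lo (R : realType) p (w : 'I_p -> R) : perm_eq (lovasz_order w) (enum 'I_p).
Proof. by rewrite /lovasz_order perm_sort perm_refl. Qed.

Lemma sorted_lo (R : realType) p (w : 'I_p -> R) :
  sorted (fun i j => w j <= w i) (lovasz_order w).
Proof. apply: sort_sorted => i j; exact: le_total. Qed.

Lemma Wn_ge0 (R : realType) p (w : 'I_p -> R) o k :
  (forall i, 0 <= w i) -> 0 <= Wn w o k.
Proof.
move=> H; rewrite /Wn; case: (ltnP k (size (map w o))) => hk.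
  by have /mapP [i _ ->] := mem_nth 0 hk.
by rewrite nth_default.
Qed.

Lemma Wn_le (R : realType) p (w : 'I_p -> R) o k c :
  (forall i, w i <= c) -> 0 <= c -> Wn w o k <= c.
Proof.
move=> H Hc; rewrite /Wn; case: (ltnP k (size (map w o))) => hk.
  by have /mapP [i _ ->] := mem_nth 0 hk.
by rewrite nth_default.
Qed.

Lemma lam_ge0 (R : realType) p (w : 'I_p -> R) k :
  (forall i, 0 <= w i) -> 0 <= Wn w (lovasz_order w) k - Wn w (lovasz_order w) k.+1.
Proof.
move=> H; rewrite subr_ge0.
have Hs := size_perm_enum (perm_lo w).
case: (ltnP k.+1 p) => hk.
  have : sorted (fun a b : R => b <= a) (map w (lovasz_order w)).
    by rewrite sorted_map; exact: sorted_lo.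
  move=> /(sortedP 0) /(_ k); rewrite size_map Hs => /(_ hk).
  by rewrite /Wn.
rewrite {1}/Wn nth_default ?size_map ?Hs //; exact: Wn_ge0.
Qed.

Lemma Tk_sub p (o : seq 'I_p) n : Tk o n \subset Tk o n.+1.
Proof.
apply/subsetP => x; rewrite /Tk !inE -(take_takel _ (leqnSn n)).
apply: mem_subseq; exact: take_subseq.
Qed.

Lemma Tk_full p (o : seq 'I_p) : perm_eq o (enum 'I_p) -> Tk o p = setT.
Proof.
move=> Ho; apply/setP => x; rewrite /Tk !inE.
have -> : take p o = o by rewrite take_oversize // (size_perm_enum Ho).
exact: mem_perm_enum.
Qed.

Lemma gr_ge0 (R : realType) p (F : {set 'I_p} -> R) o i :
  set_nondecreasing F -> 0 <= gr F o i.
Proof. move=> Hm; rewrite /gr subr_ge0; apply: Hm; exact: Tk_sub. Qed.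

Lemma Tk_S p (o : seq 'I_p) (x0 : 'I_p) n : perm_eq o (enum 'I_p) -> (n < p)%N ->
  Tk o n.+1 = nth x0 o n |: Tk o n /\ nth x0 o n \notin Tk o n.
Proof.
move=> Ho Hn; have Hs := size_perm_enum Ho; split.
  apply/setP => x; rewrite /Tk !inE (take_nth x0) ?Hs // mem_rcons inE //.
rewrite /Tk inE.
have Hu := uniq_perm_enum Ho.
rewrite -(cat_take_drop n.+1 o) in Hu.
move: Hu; rewrite (take_nth x0) ?Hs // cat_uniq rcons_uniq => /andP [/andP [] ] //.
Qed.

Lemma grP (R : realType) p (F : {set 'I_p} -> R) (o : seq 'I_p) (x0 : 'I_p) (A : {set 'I_p}) :
  submodular F -> F set0 = 0 -> perm_eq o (enum 'I_p) ->
  \sum_(i in A) gr F o i <= F A.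
Proof.
move=> Hsub F0 Ho.
suff H : forall n, (n <= p)%N -> \sum_(i in A :&: Tk o n) gr F o i <= F (A :&: Tk o n).
  by have := H p (leqnn p); rewrite Tk_full // setIT.
elim=> [|n IH] Hn.
  rewrite /Tk take0.
  have -> : A :&: [set x in [::]] = set0 by apply/setP => x; rewrite !inE andbF.
  by rewrite big_set0 F0.
have [HT Hj] := Tk_S x0 Ho Hn.
set j := nth x0 o n in HT Hj; set T := Tk o n in HT Hj IH.
have IH' := IH (ltnW Hn).
rewrite HT; case: (boolP (j \in A)) => hjA.
  have -> : A :&: (j |: T) = j |: (A :&: T).
    by apply/setP => x; rewrite !(in_setU, in_setI, in_set1); case: (eqVneq x j) => // ->; rewrite hjA.
  rewrite big_setU1; last by rewrite inE negb_and Hj orbT.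
  have -> : gr F o j = F (j |: T) - F T.
    by rewrite /j gr_nth // -HT.
  have := Hsub (j |: (A :&: T)) T.
  have -> : (j |: (A :&: T)) :|: T = j |: T.
    by apply/setP => x; rewrite !(in_setU, in_setI, in_set1); case: (x == j); case: (x \in A); case: (x \in T).
  have -> : (j |: (A :&: T)) :&: T = A :&: T.
    apply/setP => x; rewrite !(in_setU, in_setI, in_set1); case: (eqVneq x j) => [->|] /=.
      by rewrite (negbTE Hj) andbF.
    by move=> _; rewrite -andbA andbb.
  move=> Hs; rewrite /=; lra.
have -> : A :&: (j |: T) = A :&: T.
  by apply/setP => x; rewrite !(in_setU, in_setI, in_set1); case: (eqVneq x j) => // ->; rewrite (negbTE hjA).
exact: IH'.
Qed.


Lemma lov_repr (R : realType) p (F : {set 'I_p} -> R) (x0 : 'I_p) w :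
  lovasz F w = \sum_(k < p) (Wn w (lovasz_order w) k - Wn w (lovasz_order w) k.+1)
                 * (F (Tk (lovasz_order w) k.+1) - F set0).
Proof.
rewrite lovaszE (abel x0 w _ (perm_lo w)); apply: eq_bigr => k _.
by rewrite (tele _ x0 (perm_lo w)).
Qed.

Lemma lemA (R : realType) p (F : {set 'I_p} -> R) (x0 : 'I_p) o w :
  submodular F -> F set0 = 0 -> perm_eq o (enum 'I_p) -> (forall i, 0 <= w i) ->
  \sum_i w i * gr F o i <= lovasz F w.
Proof.
move=> Hsub F0 Ho Hw.
rewrite (lov_repr _ x0) (abel x0 w _ (perm_lo w)).
apply: ler_sum => k _; rewrite F0 subr0.
apply: ler_wpM2l; first exact: lam_ge0.
exact: grP.
Qed.

Lemma lov_ext (R : realType) p (F : {set 'I_p} -> R) (x0 : 'I_p) w w' :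
  submodular F -> F set0 = 0 -> (forall i, 0 <= w i) -> (forall i, w i = w' i) ->
  lovasz F w = lovasz F w'.
Proof.
move=> Hsub F0 Hw E.
have Hw' : forall i, 0 <= w' i by move=> i; rewrite -E.
apply/eqP; rewrite eq_le; apply/andP; split.
  rewrite lovaszE; under eq_bigr do rewrite E.
  exact: (lemA x0 Hsub F0 (perm_lo w) Hw').
rewrite lovaszE; under eq_bigr do rewrite -E.
exact: (lemA x0 Hsub F0 (perm_lo w') Hw).
Qed.

Lemma lov_ge0 (R : realType) p (F : {set 'I_p} -> R) w :
  set_nondecreasing F -> (forall i, 0 <= w i) -> 0 <= lovasz F w.
Proof.
move=> Hm Hw; rewrite lovaszE; apply: sumr_ge0 => i _.
by apply: mulr_ge0 => //; exact: gr_ge0.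
Qed.

Lemma lov_add (R : realType) p (F : {set 'I_p} -> R) (x0 : 'I_p) u v :
  submodular F -> F set0 = 0 -> (forall i, 0 <= u i) -> (forall i, 0 <= v i) ->
  lovasz F (fun i => u i + v i) <= lovasz F u + lovasz F v.
Proof.
move=> Hsub F0 Hu Hv; rewrite lovaszE.
under eq_bigr do rewrite mulrDl.
rewrite big_split /=.
by apply: lerD; [exact: (lemA x0 Hsub F0 (perm_lo (fun i => u i + v i)) Hu) | exact: (lemA x0 Hsub F0 (perm_lo (fun i => u i + v i)) Hv)].
Qed.

Lemma lov_mono (R : realType) p (F : {set 'I_p} -> R) (x0 : 'I_p) u v :
  submodular F -> set_nondecreasing F -> F set0 = 0 ->
  (forall i, 0 <= u i) -> (forall i, u i <= v i) ->
  lovasz F u <= lovasz F v.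
Proof.
move=> Hsub Hm F0 Hu Huv.
have Hv : forall i, 0 <= v i by move=> i; exact: le_trans (Hu i) (Huv i).
rewrite lovaszE; apply: le_trans (lemA x0 Hsub F0 (perm_lo u) Hv).
apply: ler_sum => i _; apply: ler_wpM2r => //; exact: gr_ge0.
Qed.

Lemma lov_scale (R : realType) p (F : {set 'I_p} -> R) (x0 : 'I_p) c w :
  submodular F -> F set0 = 0 -> 0 <= c -> (forall i, 0 <= w i) ->
  lovasz F (fun i => c * w i) = c * lovasz F w.
Proof.
move=> Hsub F0 Hc Hw.
case: (eqVneq c 0) => [->|Hc0].
  rewrite mul0r lovaszE; apply: big1 => i _; by rewrite mul0r mul0r.
have Hcp : 0 < c by rewrite lt_def Hc0 Hc.
have Hcw : forall i, 0 <= c * w i by move=> i; exact: mulr_ge0.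
apply/eqP; rewrite eq_le; apply/andP; split.
  rewrite lovaszE.
  under eq_bigr do rewrite -mulrA.
  rewrite -mulr_sumr; apply: ler_wpM2l => //.
  exact: (lemA x0 Hsub F0 (perm_lo (fun i => c * w i)) Hw).
rewrite lovaszE; apply: le_trans (lemA x0 Hsub F0 (perm_lo w) Hcw).
by rewrite mulr_sumr; apply: ler_sum => i _; rewrite mulrA.
Qed.


Lemma lov_le_F (R : realType) p (F : {set 'I_p} -> R) (x0 : 'I_p) w (A : {set 'I_p}) :
  submodular F -> set_nondecreasing F -> F set0 = 0 ->
  (forall i, 0 <= w i) -> (forall i, w i <= 1) -> (forall i, i \notin A -> w i = 0) ->
  lovasz F w <= F A.
Proof.
move=> Hsub Hm F0 Hw0 Hw1 HA.
rewrite lovaszE (bigID (mem A)) /=.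
rewrite [X in _ + X]big1 ?addr0; last by move=> i /HA ->; rewrite mul0r.
apply: (le_trans _ (grP x0 A Hsub F0 (perm_lo w))).
apply: ler_sum => i _; rewrite -[X in _ <= X]mul1r; apply: ler_wpM2r => //.
exact: gr_ge0.
Qed.

Lemma perm_AC p (A : {set 'I_p}) : perm_eq (enum A ++ enum (~: A)) (enum 'I_p).
Proof.
apply: uniq_perm; last by move=> x; rewrite mem_cat !mem_enum in_setC; case: (x \in A).
  rewrite cat_uniq !enum_uniq /= andbT; apply/hasPn => x; rewrite !mem_enum in_setC.
  by move=> ->.
exact: enum_uniq.
Qed.

Lemma lov_ind (R : realType) p (F : {set 'I_p} -> R) (x0 : 'I_p) (A : {set 'I_p}) c :
  submodular F -> set_nondecreasing F -> F set0 = 0 -> 0 <= c ->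
  lovasz F (fun i => c * (i \in A)%:R) = c * F A.
Proof.
move=> Hsub Hm F0 Hc.
have Hi0 : forall i, 0 <= (i \in A)%:R :> R by move=> i; case: (i \in A).
rewrite (lov_scale x0 Hsub F0 Hc Hi0); congr (_ * _).
apply/eqP; rewrite eq_le; apply/andP; split.
  apply: (lov_le_F x0) => // i; first by case: (i \in A).
  by move/negbTE => ->.
set o := enum A ++ enum (~: A).
apply: le_trans (lemA x0 Hsub F0 (perm_AC A) Hi0).
have -> : \sum_i (i \in A)%:R * gr F o i = \sum_(i in A) gr F o i.
  rewrite (bigID (mem A)) /= [X in _ + X]big1 ?addr0.
    by apply: eq_bigr => i ->; rewrite mul1r.
  by move=> i /negbTE ->; rewrite mul0r.
have HT : Tk o #|A| = A.
  apply/setP => x; rewrite /Tk inE /o take_size_cat ?mem_enum //.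
  by rewrite cardE.
have Hle : (#|A| <= p)%N by rewrite -[X in (_ <= X)%N]card_ord; exact: max_card.
rewrite -{2}HT (tele _ x0 (perm_AC A) Hle) HT F0 subr0.
by [].
Qed.

Lemma Omega_ge0 (R : realType) p (F : {set 'I_p} -> R) w :
  set_nondecreasing F -> 0 <= Omega F w.
Proof. move=> Hm; apply: lov_ge0 => // i; exact: normr_ge0. Qed.

Lemma Omega_def (R : realType) p (F : {set 'I_p} -> R) (x0 : 'I_p) w :
  submodular F -> set_nondecreasing F -> F set0 = 0 ->
  (forall k, 0 < F [set k]) ->
  Omega F w = 0 <-> w = (fun _ => 0).
Proof.
move=> Hsub Hm F0 Hk; split; last first.
  move=> ->; rewrite /Omega lovaszE; apply: big1 => i _; by rewrite normr0 mul0r.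
move=> H0; apply: functional_extensionality => i.
have H1 : `|w i| * F [set i] <= Omega F w.
  rewrite -(lov_ind x0 [set i] Hsub Hm F0 (normr_ge0 (w i))) /Omega.
  apply: (lov_mono x0) => //.
    by move=> j; apply: mulr_ge0 => //; case: (j \in [set i]).
  move=> j; rewrite inE; case: (eqVneq j i) => [->|]; first by rewrite mulr1.
  by rewrite mulr0.
rewrite H0 in H1.
have := Hk i => Hp.
have Hn : `|w i| = 0 by have := normr_ge0 (w i); nra.
by apply/eqP; rewrite -normr_eq0 Hn.
Qed.

Lemma Omega_scale (R : realType) p (F : {set 'I_p} -> R) (x0 : 'I_p) a w :
  submodular F -> F set0 = 0 ->
  Omega F (fun i => a * w i) = `|a| * Omega F w.
Proof.
move=> Hsub F0; rewrite /Omega.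
rewrite (lov_ext x0 (w' := fun i => `|a| * `|w i|) Hsub F0).
- by rewrite (lov_scale x0 Hsub F0 (normr_ge0 a)) // => i.
- by move=> i.
- by move=> i; rewrite normrM.
Qed.

Lemma Omega_tri (R : realType) p (F : {set 'I_p} -> R) (x0 : 'I_p) w1 w2 :
  submodular F -> set_nondecreasing F -> F set0 = 0 ->
  Omega F (fun i => w1 i + w2 i) <= Omega F w1 + Omega F w2.
Proof.
move=> Hsub Hm F0; rewrite /Omega.
apply: le_trans (lov_add x0 Hsub F0 (fun i => normr_ge0 (w1 i)) (fun i => normr_ge0 (w2 i))).
apply: (lov_mono x0) => // i; exact: ler_normD.
Qed.


Lemma Omega_convex (R : realType) p (F : {set 'I_p} -> R) (x0 : 'I_p) :
  submodular F -> set_nondecreasing F -> F set0 = 0 ->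
  convex_on_linf_ball (Omega F).
Proof.
move=> Hsub Hm F0 x y t _ _ /andP [t0 t1].
apply: le_trans (Omega_tri x0 (fun i => t * x i) (fun i => (1 - t) * y i) Hsub Hm F0) _.
rewrite !(Omega_scale x0) // ger0_norm // ger0_norm //; lra.
Qed.

Lemma Omega_le_g (R : realType) p (F : {set 'I_p} -> R) (x0 : 'I_p) w :
  submodular F -> set_nondecreasing F -> F set0 = 0 ->
  in_linf_ball w -> Omega F w <= F (Supp w).
Proof.
move=> Hsub Hm F0 Hw; apply: (lov_le_F x0) => // i.
by rewrite /Supp inE negbK => /eqP ->; rewrite normr0.
Qed.

Lemma jensen (R : realType) p (h : ('I_p -> R) -> R) :
  convex_on_linf_ball h ->
  forall n (lam : nat -> R) (x : nat -> 'I_p -> R),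
  (forall k, 0 <= lam k) -> \sum_(k < n) lam k <= 1 -> (forall k, in_linf_ball (x k)) ->
  h (fun i => \sum_(k < n) lam k * x k i) <=
  \sum_(k < n) lam k * h (x k) + (1 - \sum_(k < n) lam k) * h (fun _ => 0).
Proof.
move=> Hc; elim=> [|n IH] lam x Hl Hs Hx.
  have -> : (fun i : 'I_p => \sum_(k < 0) lam k * x k i) = (fun _ => 0).
    by apply: functional_extensionality => i; rewrite big_ord0.
  by rewrite !big_ord0 add0r subr0 mul1r.
rewrite big_ord_recr /= in Hs.
set l := lam n in Hs *; set S := \sum_(k < n) lam k in Hs *.
have HS0 : 0 <= S by apply: sumr_ge0 => k _.
have Hl0 : 0 <= l by exact: Hl.
have Hl1 : 0 <= 1 - l by lra.
set lam' := fun k => lam k / (1 - l).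
have Hid : forall k, (k < n)%N -> (1 - l) * lam' k = lam k.
  move=> k hk; case: (eqVneq l 1) => [E|E].
    have HS : S = 0 by lra.
    have := psumr_eq0P (P := xpredT) (F := fun k : 'I_n => lam k) (fun k _ => Hl k) HS.
    move=> /(_ (Ordinal hk) isT) /= H0; by rewrite /lam' H0 mul0r mulr0.

  rewrite /lam' mulrC divfK //; apply: contra E; rewrite subr_eq0 eq_sym; exact.
have HS' : (1 - l) * \sum_(k < n) lam' k = S.
  by rewrite mulr_sumr; apply: eq_bigr => k _; apply: Hid.
have Hl' : forall k, 0 <= lam' k by move=> k; apply: divr_ge0.
have HS'1 : \sum_(k < n) lam' k <= 1.
  case: (eqVneq l 1) => [E|E].
    by rewrite /lam' E subrr invr0 big1 // => k _; rewrite mulr0.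
  have Hp : 0 < 1 - l by rewrite lt_def Hl1 andbT subr_eq0 eq_sym.
  by rewrite -(ler_pM2l Hp) HS' mulr1; lra.
set y := fun i => \sum_(k < n) lam' k * x k i.
have Hy : in_linf_ball y.
  move=> i; rewrite /y; apply: le_trans (ler_norm_sum _ _ _) _.
  apply: le_trans HS'1; apply: ler_sum => k _.
  rewrite normrM ger0_norm //; rewrite -[X in _ <= X]mulr1; apply: ler_wpM2l => //.
  exact: Hx.
have -> : (fun i => \sum_(k < n.+1) lam k * x k i) = (fun i => l * x n i + (1 - l) * y i).
  apply: functional_extensionality => i; rewrite big_ord_recr /= addrC /y mulr_sumr.
  congr (_ + _); apply: eq_bigr => k _; by rewrite mulrA Hid.
apply: le_trans (Hc (x n) y l (Hx n) Hy _) _; first by rewrite Hl0 /=; lra.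
have := IH lam' x Hl' HS'1 Hx => IHn.
have IH2 := ler_wpM2l Hl1 IHn.
rewrite big_ord_recr /= -/l.
have E1 : (1 - l) * (\sum_(k < n) lam' k * h (x k)) = \sum_(k < n) lam k * h (x k).
  by rewrite mulr_sumr; apply: eq_bigr => k _; rewrite mulrA Hid.
have E2 : (1 - l) * ((1 - \sum_(k < n) lam' k) * h (fun _ => 0)) = (1 - l - S) * h (fun _ => 0).
  by rewrite mulrA mulrBr mulr1 HS'.
rewrite mulrDr E1 E2 in IH2.
rewrite big_ord_recr /= -/l -/S.
lra.
Qed.


Lemma sum_tele (R : realType) (W : nat -> R) n :
  \sum_(k < n) (W k - W k.+1) = W 0%N - W n.
Proof.
elim: n => [|n IH]; first by rewrite big_ord0 subrr.
by rewrite big_ord_recr /= IH; ring.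
Qed.

Lemma sum_ind (R : realType) p (T : {set 'I_p}) i :
  \sum_(j in T) (j == i)%:R = (i \in T)%:R :> R.
Proof.
case: (boolP (i \in T)) => hi.
  rewrite (bigD1 i) //= eqxx big1 ?addr0 // => j /andP [_ /negbTE ->] //.
apply: big1 => j hj; case: (eqVneq j i) => // E; by rewrite -E hj in hi.
Qed.

Lemma sum_delta (R : realType) p (a : 'I_p -> R) i :
  \sum_j a j * (j == i)%:R = a i.
Proof.
rewrite (bigD1 i) //= eqxx mulr1 big1 ?addr0 // => j /negbTE ->; by rewrite mulr0.
Qed.

Lemma Omega_repr (R : realType) p (F : {set 'I_p} -> R) (x0 : 'I_p) w :
  F set0 = 0 ->
  Omega F w = \sum_(k < p) (Wn (fun i => `|w i|) (lovasz_order (fun i => `|w i|)) k -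
      Wn (fun i => `|w i|) (lovasz_order (fun i => `|w i|)) k.+1) *
      F (Tk (lovasz_order (fun i => `|w i|)) k.+1).
Proof.
move=> F0; rewrite /Omega (lov_repr _ x0); apply: eq_bigr => k _; by rewrite F0 subr0.
Qed.

Lemma envelope (R : realType) p (F : {set 'I_p} -> R) (x0 : 'I_p) :
  submodular F -> set_nondecreasing F -> F set0 = 0 ->
  forall h, convex_on_linf_ball h -> (forall w, in_linf_ball w -> h w <= F (Supp w)) ->
  forall w, in_linf_ball w -> h w <= Omega F w.
Proof.
move=> Hsub Hm F0 h Hc Hg w Hw.
set a := fun i => `|w i|.
set q := lovasz_order a.
set lam := fun k => Wn a q k - Wn a q k.+1.
set sg := fun i => if 0 <= w i then 1 else -1 : R.
set x := fun k i => sg i * (i \in Tk q k.+1)%:R.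
have Ha : forall i, 0 <= a i by move=> i; exact: normr_ge0.
have Hlam : forall k, 0 <= lam k by move=> k; exact: lam_ge0.
have Hsum : \sum_(k < p) lam k <= 1.
  rewrite /lam sum_tele /Wn [nth 0 _ p]nth_default ?size_map ?(size_perm_enum (perm_lo a)) //.
  rewrite subr0; apply: Wn_le => // i; exact: Hw i.
have Hx : forall k, in_linf_ball (x k).
  move=> k i; rewrite /x /sg normrM; case: (0 <= w i); case: (i \in Tk q k.+1);
  by rewrite ?normrN ?normr1 ?normr0 ?mulr1 ?mulr0.
have HW : w = fun i => \sum_(k < p) lam k * x k i.
  apply: functional_extensionality => i.
  have := abel x0 a (fun j => (j == i)%:R) (perm_lo a).
  rewrite sum_delta => Habel.
  have -> : \sum_(k < p) lam k * x k i = sg i * a i.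
    rewrite Habel mulr_sumr; apply: eq_bigr => k _.
    by rewrite sum_ind /x /lam; rewrite mulrCA.
  rewrite /sg /a; case: (lerP 0 (w i)) => hw.
    by rewrite mul1r ger0_norm.
  by rewrite ltr0_norm // mulN1r opprK.
rewrite {1}HW; apply: le_trans (jensen Hc Hlam Hsum Hx) _.
rewrite (Omega_repr x0) //.
have Hh0 : h (fun _ => 0) <= 0.
  have := Hg (fun _ => 0).
  have -> : Supp (fun _ : 'I_p => 0 : R) = set0 by apply/setP => i; rewrite !inE eqxx.
  by rewrite F0; apply => i; rewrite normr0.
have H1 : 0 <= 1 - \sum_(k < p) lam k by lra.
rewrite -[X in _ <= X]addr0; apply: lerD; last first.
  nra.
apply: ler_sum => k _; apply: ler_wpM2l => //.
apply: le_trans (Hg _ (Hx k)) _.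
have -> : Supp (x k) = Tk q k.+1.
  apply/setP => i; rewrite /Supp inE /x /sg.
  by case: (0 <= w i); case: (i \in Tk q k.+1); rewrite ?mulr1 ?mulr0 ?eqxx ?oppr_eq0 ?oner_eq0.
by [].
Qed.


Lemma F_pos (R : realType) p (F : {set 'I_p} -> R) (A : {set 'I_p}) :
  set_nondecreasing F -> (forall k, 0 < F [set k]) -> A != set0 -> 0 < F A.
Proof.
move=> Hm Hk /set0Pn [k hk]; apply: lt_le_trans (Hk k) _; apply: Hm.
by rewrite sub1set.
Qed.

Lemma F_ge0 (R : realType) p (F : {set 'I_p} -> R) (A : {set 'I_p}) :
  set_nondecreasing F -> F set0 = 0 -> 0 <= F A.
Proof. by move=> Hm F0; rewrite -F0; apply: Hm; exact: sub0set. Qed.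

Lemma l1_ge0 (R : realType) p (s : 'I_p -> R) A : 0 <= l1_restr s A.
Proof. by apply: sumr_ge0 => i _. Qed.

Lemma l1_sub (R : realType) p (s : 'I_p -> R) (A B : {set 'I_p}) :
  A \subset B -> l1_restr s A <= l1_restr s B.
Proof.
move=> HAB; rewrite /l1_restr [X in _ <= X](big_setID A) /= (setIidPr HAB).
rewrite -[X in X <= _]addr0; apply: lerD => //; exact: l1_ge0.
Qed.

Lemma F_subadd (R : realType) p (F : {set 'I_p} -> R) (I : finType) (P : pred I)
    (f : I -> {set 'I_p}) :
  submodular F -> set_nondecreasing F -> F set0 = 0 ->
  F (\bigcup_(i | P i) f i) <= \sum_(i | P i) F (f i).
Proof.
move=> Hsub Hm F0.
apply: (big_ind2 (fun S r => F S <= r)); first by rewrite F0.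
  move=> S1 r1 S2 r2 H1 H2; apply: le_trans (_ : F S1 + F S2 <= _); last exact: lerD.
  have := Hsub S1 S2; have := F_ge0 (S1 :&: S2) Hm F0; lra.
by [].
Qed.

Definition rratio (R : realType) p (F : {set 'I_p} -> R) (s : 'I_p -> R) A := l1_restr s A / F A.

Lemma insep_min (R : realType) p (F : {set 'I_p} -> R) (s : 'I_p -> R) (M : R) A :
  set_nondecreasing F -> (forall k, 0 < F [set k]) ->
  (forall B, B != set0 -> rratio F s B <= M) ->
  A != set0 -> rratio F s A = M ->
  (forall B, B != set0 -> rratio F s B = M -> (#|A| <= #|B|)%N) ->
  ~ separable F A.
Proof.
move=> Hm Hk Hmax HA0 HAM Hmin [_ [P [HP HcP HFP]]].
move: HP => /and3P [/eqP Hcov Htriv H0P].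
have Hne : forall X, X \in P -> X != set0 by move=> X hX; apply: contra H0P => /eqP <-.
have Hle : forall X, X \in P -> l1_restr s X <= M * F X.
  move=> X hX; rewrite -ler_pdivrMr; last exact: F_pos (Hne X hX).
  exact: Hmax (Hne X hX).
have Hl1 : l1_restr s A = \sum_(X in P) l1_restr s X.
  by rewrite /l1_restr -Hcov big_trivIset.
have HFA := F_pos Hm Hk HA0.
have HlA : l1_restr s A = M * F A.
  by rewrite -HAM /rratio divfK // gt_eqF.
have Hsum0 : \sum_(X in P) (M * F X - l1_restr s X) = 0.
  by rewrite sumrB -mulr_sumr -HFP -Hl1 HlA subrr.
have Heq : forall X, X \in P -> M * F X - l1_restr s X = 0.
  apply: (psumr_eq0P _ Hsum0) => X hX; rewrite subr_ge0; exact: Hle.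
move: HcP => /card_gt1P [X [Y [hX hY hXY]]].
have HXM : rratio F s X = M.
  have := Heq X hX; move/eqP; rewrite subr_eq0 => /eqP E.
  by rewrite /rratio -E mulfK // gt_eqF // F_pos // Hne.
have := Hmin X (Hne X hX) HXM.
have HXA : X \subset A by rewrite -Hcov; exact: bigcup_sup.
have HYA : Y \subset A by rewrite -Hcov; exact: bigcup_sup.
have /set0Pn [y hy] := Hne Y hY.
have hyX : y \notin X.
  have := (trivIsetP Htriv) Y X hY hX; rewrite eq_sym => /(_ hXY).
  move=> /disjoint_setI0 /setP /(_ y); rewrite !inE hy /= => ->.
  by [].
have : X \proper A by apply/properP; split => //; exists y => //; exact: (subsetP HYA).
move=> /proper_card; rewrite ltnNge => /negP; exact.
Qed.


Lemma closure_stable (R : realType) p (F : {set 'I_p} -> R) (A B : {set 'I_p}) :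
  set_nondecreasing F -> A \subset B -> F B = F A ->
  (forall C : {set 'I_p}, A \subset C -> F C = F A -> (#|C| <= #|B|)%N) ->
  stable F B.
Proof.
move=> Hm HAB HFB Hmax C HBC.
have HBC' := proper_sub HBC.
rewrite lt_def Hm // andbT.
apply/negP => /eqP E.
have E' : F C = F A by rewrite E HFB.
have := Hmax C (subset_trans HAB HBC') E'.
by rewrite leqNgt proper_card.
Qed.

Lemma closure_insep (R : realType) p (F : {set 'I_p} -> R) (A B : {set 'I_p}) :
  submodular F -> set_nondecreasing F -> F set0 = 0 -> (forall k, 0 < F [set k]) ->
  A != set0 -> ~ separable F A -> A \subset B -> F B = F A -> ~ separable F B.
Proof.
move=> Hsub Hm F0 Hk HA0 HinsA HAB HFB [_ [P [HP HcP HFP]]].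
move: HP => /and3P [/eqP Hcov Htriv H0P].
have Hne : forall X, X \in P -> X != set0 by move=> X hX; apply: contra H0P => /eqP <-.
have Hcup : \bigcup_(X in P) (X :&: A) = A.
  apply/setP => x; apply/bigcupP/idP => [[X hX]|hx]; first by rewrite inE => /andP [].
  have : x \in cover P by rewrite Hcov (subsetP HAB).
  move=> /bigcupP [X hX hxX]; exists X => //; by rewrite inE hxX hx.
have Hsa : F A <= \sum_(X in P) F (X :&: A).
  by rewrite -{1}Hcup; exact: F_subadd.
have Heq : forall X, X \in P -> F X - F (X :&: A) = 0.
  have Hnn : forall X, X \in P -> 0 <= F X - F (X :&: A).
    by move=> X _; rewrite subr_ge0; apply: Hm; exact: subsetIl.
  apply: psumr_eq0P => //.
  apply/eqP; rewrite eq_le sumr_ge0 // andbT.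
  by rewrite sumrB -HFP HFB subr_le0.
case: (boolP [exists (X | X \in P), X :&: A == set0]).
  move=> /existsP [X /andP [hX /eqP E]].
  have := Heq X hX; rewrite E F0 subr0 => E2.
  by have := F_pos Hm Hk (Hne X hX); rewrite E2 ltxx.
move=> /existsPn Hall.
have HallX : forall X, X \in P -> X :&: A != set0.
  by move=> X hX; have := Hall X; rewrite hX.
have Hinj : {in P &, injective (fun X => X :&: A)}.
  move=> X1 X2 h1 h2 /= E; case: (eqVneq X1 X2) => // hne.
  have := (trivIsetP Htriv) X1 X2 h1 h2 hne => /disjoint_setI0 /setP D.
  have /set0Pn [x hx] := HallX X1 h1.
  have hx2 : x \in X2 :&: A by rewrite -E.
  move: (D x); rewrite !inE; move: hx hx2; rewrite !inE => /andP [-> _] /andP [-> _].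
  by [].
apply: HinsA; split => //.
exists [set X :&: A | X in P]; split.
- apply/and3P; split.
  + by rewrite /cover big_imset //= Hcup.
  + apply/trivIsetP => Y1 Y2 /imsetP [X1 h1 ->] /imsetP [X2 h2 ->] hne.
    have hX : X1 != X2 by apply: contra hne => /eqP ->.
    have := (trivIsetP Htriv) X1 X2 h1 h2 hX => /disjoint_setI0 /setP D.
    rewrite -setI_eq0; apply/eqP/setP => x; move: (D x); rewrite !inE.
    by case: (x \in X1); case: (x \in X2); case: (x \in A).
  + apply/imsetP => [[X hX E]]; by have := HallX X hX; rewrite -E eqxx.
- by rewrite card_in_imset.
- rewrite big_imset //= -HFB HFP; apply: eq_bigr => X hX.
  by have := Heq X hX; move/eqP; rewrite subr_eq0 => /eqP.
Qed.


Lemma dual_ub (R : realType) p (F : {set 'I_p} -> R) (x0 : 'I_p) s M w :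
  submodular F -> set_nondecreasing F -> F set0 = 0 ->
  (forall T, l1_restr s T <= M * F T) -> 0 <= M -> Omega F w <= 1 -> dot s w <= M.
Proof.
move=> Hsub Hm F0 HT HM Hw.
set a := fun i => `|w i|.
have Ha : forall i, 0 <= a i by move=> i; exact: normr_ge0.
apply: le_trans (_ : \sum_i a i * `|s i| <= M).
  apply: ler_sum => i _; rewrite /a -normrM mulrC; exact: ler_norm.
rewrite (abel x0 a _ (perm_lo a)).
apply: le_trans (_ : M * Omega F w <= M); last first.
  by rewrite -[X in _ <= X]mulr1; apply: ler_wpM2l.
rewrite (Omega_repr x0) // mulr_sumr; apply: ler_sum => k _.
rewrite mulrCA; apply: ler_wpM2l; first exact: lam_ge0.
exact: HT.
Qed.

Lemma ratio_le (R : realType) p (F : {set 'I_p} -> R) s M T :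
  set_nondecreasing F -> F set0 = 0 -> (forall k, 0 < F [set k]) ->
  (forall B, B != set0 -> rratio F s B <= M) -> 0 <= M -> l1_restr s T <= M * F T.
Proof.
move=> Hm F0 Hk Hmax HM.
case: (eqVneq T set0) => [->|hT].
  by rewrite /l1_restr big_set0 F0 mulr0.
rewrite -ler_pdivrMr; last exact: F_pos.
exact: Hmax.
Qed.

Theorem proposition1 (R : realType) (p : nat) (F : {set 'I_p} -> R) :
  (0 < p)%N ->
  submodular F -> set_nondecreasing F -> F set0 = 0 ->
  (forall k : 'I_p, 0 < F [set k]) ->
  [/\ is_norm (Omega F),
      convex_envelope_on_linf_ball (Omega F) (fun w => F (Supp w))
    & forall s : 'I_p -> R,
        exists M : R,
          [/\ is_max_of (fun x => exists w, Omega F w <= 1 /\ x = dot s w) M,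
              is_max_of (fun x => exists A, A != set0 /\ x = l1_restr s A / F A) M
            & is_max_of (fun x => exists A, in_T F A /\ x = l1_restr s A / F A) M]].
Proof.
move=> hp Hsub Hm F0 Hk.
pose x0 : 'I_p := Ordinal hp.
split.
- split.
  + move=> w; exact: Omega_ge0.
  + move=> w; exact: Omega_def.
  + move=> a w; exact: Omega_scale.
  + move=> w1 w2; exact: Omega_tri.
- split.
  + exact: Omega_convex.
  + move=> w; exact: Omega_le_g.
  + move=> h Hc Hg w Hw; exact: (envelope x0).
move=> s.
have HP0 : [set x0] != set0 by apply/set0Pn; exists x0; rewrite inE.
have [A1 HA1 Hmax] := @arg_maxP _ _ _ [set x0] (fun A => A != set0) (rratio F s) HP0.
set M := rratio F s A1.
have Hmax' : forall B, B != set0 -> rratio F s B <= M by move=> B hB; exact: Hmax.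
have HM0 : 0 <= M by rewrite /M /rratio; apply: divr_ge0; [exact: l1_ge0 | exact: F_ge0].
have HP1 : (A1 != set0) && (rratio F s A1 == M) by rewrite HA1 eqxx.
have [A2 /andP [HA2 /eqP HA2M] Hmin] :=
  @arg_minnP _ A1 (fun A => (A != set0) && (rratio F s A == M)) (fun A => #|A|) HP1.
have Hins2 : ~ separable F A2.
  apply: (insep_min Hm Hk Hmax' HA2 HA2M) => B hB hBM.
  by apply: Hmin; rewrite hB hBM eqxx.
have HP2 : (A2 \subset A2) && (F A2 == F A2) by rewrite subxx eqxx.
have [B /andP [HAB /eqP HFB] HmaxB] :=
  @arg_maxnP _ A2 (fun C => (A2 \subset C) && (F C == F A2)) (fun C => #|C|) HP2.
have HB0 : B != set0.
  move: HA2 => /set0Pn [y hy]; apply/set0Pn; exists y; exact: (subsetP HAB).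
have HBM : rratio F s B = M.
  apply/eqP; rewrite eq_le Hmax' //= -HA2M /rratio HFB.
  apply: ler_wpM2r; last exact: l1_sub.
  by rewrite invr_ge0; exact: F_ge0.
have HstB : stable F B.
  apply: (closure_stable Hm HAB HFB) => C hC hF.
  by apply: HmaxB; rewrite hC hF eqxx.
have HinsB : ~ separable F B by exact: (closure_insep Hsub Hm F0 Hk HA2 Hins2 HAB HFB).
have HT := fun T => ratio_le T Hm F0 Hk Hmax' HM0.
exists M; split.
- split; last by move=> x [w [Hw ->]]; exact: (dual_ub x0).
  have HFA1 := F_pos Hm Hk HA1.
  set sg := fun i => if 0 <= s i then 1 else -1 : R.
  exists (fun i => sg i * ((i \in A1)%:R / F A1)); split.
    rewrite /Omega.
    rewrite (lov_ext x0 (w' := fun i => (F A1)^-1 * (i \in A1)%:R) Hsub F0).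
    + rewrite (lov_ind x0) //; last by rewrite invr_ge0 ltW.
      by rewrite mulVf // gt_eqF.
    + by move=> i.
    + move=> i; rewrite normrM /sg.
      have -> : `|(if 0 <= s i then 1 else -1) : R| = 1 by case: (0 <= s i); rewrite ?normrN normr1.
      rewrite mul1r mulrC ger0_norm //; apply: mulr_ge0; first by rewrite invr_ge0 ltW.
      by case: (i \in A1).
  rewrite /M /rratio /l1_restr mulr_suml /dot [in RHS](bigID (mem A1)) /=.
  rewrite [X in _ = _ + X]big1 ?addr0; last first.
    by move=> i /negbTE ->; rewrite mul0r mulr0 mulr0.
  apply: eq_bigr => i ->; rewrite /sg.
  case: (lerP 0 (s i)) => hs.
    by rewrite ger0_norm // !mul1r.
  by rewrite ltr0_norm // mulN1r mul1r mulrN mulNr.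
- split; first by exists A1.
  by move=> x [A [hA ->]]; exact: Hmax'.
- split; first by exists B; split => //; rewrite -HBM.
  by move=> x [A [[hA _ _] ->]]; exact: Hmax'.
Qed.
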